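(* Let $\mathcal X=\mathbb C^n$. For every strictly convex function $F:\mathrm{Dens}(\mathcal X)\to\mathbb R$, regarded as a quantum property, $\mathrm{elic}_Q(F)=n^2-1$.
   Context: $\mathrm{Herm}(\mathcal X)$ Hermitian matrices with $\langle X,Y\rangle=\mathrm{Tr}(X^*Y)$; $\mathrm{Dens}(\mathcal X)$ density matrices. A quantum property is a map $\Gamma:\mathrm{Dens}(\mathcal X)\to\mathcal R$. It is elicitable if there is a quantum score $S=(s,\mu)$, $s:\mathcal R\times\mathbb N\to\mathbb R$, $\mu(r)$ a measurement (finite family of positive semidefinite operators summing to $I$), with $\{\Gamma(\rho)\}=\arg\max_{r\in\mathcal R}\sum_y\langle\mu(r)_y,\rho\rangle s(r,y)$ for all $\rho$. $\hat\Gamma:\mathrm{Dens}(\mathcal X)\to\mathbb R^k$ is identifiable if for each $r$ in its range there is $V(r)\in\mathrm{Herm}(\mathcal X)^k$ with $\hat\Gamma(\rho)=r\iff\langle V(r)_i,\rho\rangle=0$ for all $i$. $\Gamma$ is $k$-elicitable if $\Gamma=\psi\circ\hat\Gamma$ for some elicitable and identifiable $\hat\Gamma:\mathrm{Dens}(\mathcal X)\to\mathbb R^k$ and some $\psi:\mathbb R^k\to\mathcal R$; $\mathrm{elic}_Q(\Gamma)$ is the least such $k$. *)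

(* Defs.v *)
From HB Require Import structures.
From mathcomp Require Import all_boot all_order all_algebra.
From mathcomp Require Import reals.
From mathcomp Require Import complex.

Set Implicit Arguments.
Unset Strict Implicit.
Unset Printing Implicit Defensive.

Import Order.TTheory GRing.Theory Num.Theory.
Local Open Scope ring_scope.

Section QuantumElicitation.
Variable R : realType.
Variable n : nat.

Notation Mat := 'M[R[i]]_n.

Definition adjmx (p q : nat) (A : 'M[R[i]]_(p, q)) : 'M[R[i]]_(q, p) :=
  (map_mx conjc A)^T.

Definition hermitian (A : Mat) : Prop := adjmx A = A.

Definition psd (A : Mat) : Prop :=
  hermitian A /\ forall v : 'cV[R[i]]_n, 0 <= (adjmx v *m A *m v) 0 0.

Definition density (rho : Mat) : Prop := psd rho /\ \tr rho = 1.

Definition hs_inner (X Y : Mat) : R[i] := \tr (adjmx X *m Y).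

(* A measurement: finite family (mu_y)_{y < size mu} of PSD operators
   summing to the identity; outcomes y are natural numbers. *)
Definition measurement (mu : seq Mat) : Prop :=
  (forall y, (y < size mu)%N -> psd (nth 0 mu y)) /\
  \sum_(y < size mu) nth 0 mu y = 1%:M.

(* Expected quantum score  sum_y <mu(r)_y, rho> s(r, y)  (a real number,
   since <mu(r)_y, rho> is real for Hermitian mu(r)_y and rho). *)
Definition expected_score (RR : Type) (s : RR -> nat -> R)
  (mu : RR -> seq Mat) (r : RR) (rho : Mat) : R :=
  \sum_(y < size (mu r)) complex.Re (hs_inner (nth 0 (mu r) y) rho) * s r y.

(* Quantum properties Gamma : Dens(X) -> RR are encoded as functions on all
   matrices; only their values on density matrices matter below. *)

Definition elicitable (RR : Type) (Gamma : Mat -> RR) : Prop :=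
  exists (s : RR -> nat -> R) (mu : RR -> seq Mat),
    (forall r, measurement (mu r)) /\
    forall rho, density rho ->
      forall r : RR,
        (forall r' : RR, expected_score s mu r' rho <= expected_score s mu r rho)
        <-> r = Gamma rho.

Definition identifiable (k : nat) (Ghat : Mat -> 'rV[R]_k) : Prop :=
  forall r : 'rV[R]_k, (exists rho0, density rho0 /\ Ghat rho0 = r) ->
    exists V : 'I_k -> Mat,
      (forall i, hermitian (V i)) /\
      forall rho, density rho ->
        (Ghat rho = r <-> forall i, hs_inner (V i) rho = 0).

Definition k_elicitable (RR : Type) (Gamma : Mat -> RR) (k : nat) : Prop :=
  exists (Ghat : Mat -> 'rV[R]_k) (psi : 'rV[R]_k -> RR),
    elicitable Ghat /\ identifiable Ghat /\
    forall rho, density rho -> Gamma rho = psi (Ghat rho).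

Definition elicQ_is (RR : Type) (Gamma : Mat -> RR) (m : nat) : Prop :=
  k_elicitable Gamma m /\ forall k, k_elicitable Gamma k -> (m <= k)%N.

Definition strictly_convex (F : Mat -> R) : Prop :=
  forall (rho sigma : Mat) (t : R),
    density rho -> density sigma -> rho <> sigma -> 0 < t < 1 ->
    F ((t%:C)%C *: rho + ((1 - t)%:C)%C *: sigma) < t * F rho + (1 - t) * F sigma.

End QuantumElicitation.

(* Main.v *)
Require Import Defs.
From HB Require Import structures.
From mathcomp Require Import all_boot all_order all_algebra.
From mathcomp Require Import reals.
From mathcomp Require Import complex.
From mathcomp Require Import ring lra zify.
From Stdlib Require Import ClassicalEpsilon.
Import Order.TTheory GRing.Theory Num.Theory.
Local Open Scope ring_scope.

Set Implicit Arguments.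
Unset Strict Implicit.
Unset Printing Implicit Defensive.


Section Basic.
Variable R : realType.
Implicit Types (z w : R[i]) (x y : R).

Lemma cReD z w : complex.Re (z + w) = complex.Re z + complex.Re w.
Proof. by case: z; case: w. Qed.
Lemma cImD z w : complex.Im (z + w) = complex.Im z + complex.Im w.
Proof. by case: z; case: w. Qed.
Lemma cReN z : complex.Re (- z) = - complex.Re z.
Proof. by case: z. Qed.
Lemma cImN z : complex.Im (- z) = - complex.Im z.
Proof. by case: z. Qed.
Lemma cReB z w : complex.Re (z - w) = complex.Re z - complex.Re w.
Proof. by rewrite cReD cReN. Qed.
Lemma cImB z w : complex.Im (z - w) = complex.Im z - complex.Im w.
Proof. by rewrite cImD cImN. Qed.
Lemma cReM z w : complex.Re (z * w) = complex.Re z * complex.Re w - complex.Im z * complex.Im w.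
Proof. by case: z; case: w. Qed.
Lemma cImM z w : complex.Im (z * w) = complex.Re z * complex.Im w + complex.Im z * complex.Re w.
Proof. by case: z => a b; case: w => c d /=; ring. Qed.
Lemma cReC x : complex.Re (x%:C)%C = x. Proof. by []. Qed.
Lemma cImC x : complex.Im (x%:C)%C = 0. Proof. by []. Qed.
Lemma cRe0 : complex.Re (0 : R[i]) = 0. Proof. by []. Qed.
Lemma cIm0 : complex.Im (0 : R[i]) = 0. Proof. by []. Qed.
Lemma cRe1 : complex.Re (1 : R[i]) = 1. Proof. by []. Qed.
Lemma cIm1 : complex.Im (1 : R[i]) = 0. Proof. by []. Qed.
Lemma cReJ z : complex.Re (conjc z) = complex.Re z. Proof. by case: z. Qed.
Lemma cImJ z : complex.Im (conjc z) = - complex.Im z. Proof. by case: z. Qed.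
Lemma cRei : complex.Re ('i%C : R[i]) = 0. Proof. by []. Qed.
Lemma cImi : complex.Im ('i%C : R[i]) = 1. Proof. by []. Qed.
Lemma cRe_sum (I : Type) (r : seq I) (P : pred I) (f : I -> R[i]) :
  complex.Re (\sum_(i <- r | P i) f i) = \sum_(i <- r | P i) complex.Re (f i).
Proof. exact: (big_morph _ cReD cRe0). Qed.
Lemma cIm_sum (I : Type) (r : seq I) (P : pred I) (f : I -> R[i]) :
  complex.Im (\sum_(i <- r | P i) f i) = \sum_(i <- r | P i) complex.Im (f i).
Proof. exact: (big_morph _ cImD cIm0). Qed.
Lemma complex_ext z w : complex.Re z = complex.Re w -> complex.Im z = complex.Im w -> z = w.
Proof. by case: z; case: w => /= a b c d -> ->. Qed.
Lemma conjcE z : conjc z = z -> complex.Im z = 0.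
Proof. case: z => a b /= [] h.
have: b + b = 0 by rewrite -{1}h addNr.
move=> hb; lra. Qed.
Lemma conjc_sum (I : Type) (r : seq I) (P : pred I) (f : I -> R[i]) :
  conjc (\sum_(i <- r | P i) f i) = \sum_(i <- r | P i) conjc (f i).
Proof. exact: (rmorph_sum conjc). Qed.
Lemma lec0 z : complex.Im z = 0 -> 0 <= complex.Re z -> 0 <= z.
Proof. by move=> h1 h2; rewrite lecE h1 eqxx. Qed.
Lemma sum_only (T : finType) (V : nmodType) (f : T -> V) b :
  (forall i, i != b -> f i = 0) -> \sum_i f i = f b.
Proof. move=> h. rewrite (bigD1 b) //=. rewrite big1 ?addr0 //. Qed.
End Basic.


Section Mat.
Variable R : realType.
Variable n : nat.
Notation Mat := 'M[R[i]]_n.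
Implicit Types (A B C : Mat) (z w : R[i]) (x y : R).

Lemma adjmxE p q (A : 'M[R[i]]_(p, q)) i j : adjmx A i j = conjc (A j i).
Proof. by rewrite !mxE. Qed.
Lemma adjmxK p q (A : 'M[R[i]]_(p, q)) : adjmx (adjmx A) = A.
Proof. by apply/matrixP => i j; rewrite !adjmxE conjcK. Qed.
Lemma adjmxD p q (A B : 'M[R[i]]_(p, q)) : adjmx (A + B) = adjmx A + adjmx B.
Proof. by apply/matrixP => i j; rewrite !mxE rmorphD. Qed.
Lemma adjmxN p q (A : 'M[R[i]]_(p, q)) : adjmx (- A) = - adjmx A.
Proof. by apply/matrixP => i j; rewrite !mxE rmorphN. Qed.
Lemma adjmxB p q (A B : 'M[R[i]]_(p, q)) : adjmx (A - B) = adjmx A - adjmx B.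
Proof. by rewrite adjmxD adjmxN. Qed.
Lemma adjmxZ p q z (A : 'M[R[i]]_(p, q)) : adjmx (z *: A) = conjc z *: adjmx A.
Proof. by apply/matrixP => i j; rewrite !mxE rmorphM. Qed.
Lemma adjmx_mul p q r (A : 'M[R[i]]_(p, q)) (B : 'M[R[i]]_(q, r)) :
  adjmx (A *m B) = adjmx B *m adjmx A.
Proof. by rewrite /adjmx map_mxM trmx_mul. Qed.
Lemma adjmx1 : adjmx (1%:M : Mat) = 1%:M.
Proof. by apply/matrixP => i j; rewrite !mxE eq_sym conjc_nat. Qed.
Lemma adjmx0 p q : adjmx (0 : 'M[R[i]]_(p, q)) = 0.
Proof. by apply/matrixP => i j; rewrite !mxE conjc0. Qed.

Lemma hs_innerE A B : hs_inner A B = \sum_i \sum_j conjc (A j i) * B j i.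
Proof. rewrite /hs_inner /mxtrace; apply: eq_bigr => i _; rewrite mxE.
by apply: eq_bigr => j _; rewrite adjmxE. Qed.

Lemma hs_conj A B : conjc (hs_inner A B) = hs_inner B A.
Proof. rewrite !hs_innerE conjc_sum; apply: eq_bigr => i _.
rewrite conjc_sum; apply: eq_bigr => j _. by rewrite rmorphM /= conjcK mulrC. Qed.

Lemma hs_addr A B C : hs_inner A (B + C) = hs_inner A B + hs_inner A C.
Proof. by rewrite /hs_inner mulmxDr mxtraceD. Qed.
Lemma hs_subr A B C : hs_inner A (B - C) = hs_inner A B - hs_inner A C.
Proof. by rewrite /hs_inner mulmxBr linearB. Qed.
Lemma hs_scaler A z B : hs_inner A (z *: B) = z * hs_inner A B.
Proof. by rewrite /hs_inner -scalemxAr mxtraceZ. Qed.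
Lemma hs_addl A B C : hs_inner (A + B) C = hs_inner A C + hs_inner B C.
Proof. by rewrite /hs_inner adjmxD mulmxDl mxtraceD. Qed.
Lemma hs_subl A B C : hs_inner (A - B) C = hs_inner A C - hs_inner B C.
Proof. by rewrite /hs_inner adjmxB mulmxBl linearB. Qed.
Lemma hs_scalel z A B : hs_inner (z *: A) B = conjc z * hs_inner A B.
Proof. by rewrite /hs_inner adjmxZ -scalemxAl mxtraceZ. Qed.
Lemma hs_1l B : hs_inner 1%:M B = \tr B.
Proof. by rewrite /hs_inner adjmx1 mul1mx. Qed.
Lemma hs_suml (I : Type) (r : seq I) (P : pred I) (f : I -> Mat) B :
  hs_inner (\sum_(i <- r | P i) f i) B = \sum_(i <- r | P i) hs_inner (f i) B.
Proof. elim/big_rec2: _ => [|i y1 y2 _ <-]; last by rewrite hs_addl.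
by rewrite /hs_inner adjmx0 mul0mx mxtrace0. Qed.

Lemma hs_delta a b B : hs_inner (delta_mx a b) B = B a b.
Proof. rewrite hs_innerE (@sum_only _ _ _ b).
  rewrite (@sum_only _ _ _ a); first by rewrite !mxE conjc_nat !eqxx mul1r.
  by move=> j /negPf hj; rewrite !mxE conjc_nat hj mul0r.
move=> i /negPf hi; rewrite big1 // => j _.
by rewrite !mxE conjc_nat hi andbF mul0r. Qed.

Lemma hermE A (i j : 'I_n) : Defs.hermitian A -> A i j = conjc (A j i).
Proof. by move=> h; rewrite -{1}h adjmxE. Qed.

Lemma herm_hs_real A B : Defs.hermitian A -> Defs.hermitian B -> complex.Im (hs_inner A B) = 0.
Proof. move=> hA hB; apply: conjcE.
rewrite hs_conj /hs_inner hA hB mxtrace_mulC. by []. Qed.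

Lemma herm_add A B : Defs.hermitian A -> Defs.hermitian B -> Defs.hermitian (A + B).
Proof. by rewrite /Defs.hermitian adjmxD => -> ->. Qed.
Lemma herm_sub A B : Defs.hermitian A -> Defs.hermitian B -> Defs.hermitian (A - B).
Proof. by rewrite /Defs.hermitian adjmxB => -> ->. Qed.
Lemma herm_scale x A : Defs.hermitian A -> Defs.hermitian ((x%:C)%C *: A).
Proof. by rewrite /Defs.hermitian adjmxZ conjc_real => ->. Qed.
Lemma herm1 : Defs.hermitian (1%:M : Mat). Proof. exact: adjmx1. Qed.
Lemma herm0 : Defs.hermitian (0 : Mat). Proof. exact: adjmx0. Qed.
Lemma herm_sum (I : Type) (r : seq I) (P : pred I) (f : I -> Mat) :
  (forall i, P i -> Defs.hermitian (f i)) -> Defs.hermitian (\sum_(i <- r | P i) f i).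
Proof. move=> h; elim/big_rec: _ => [|i y Pi hy]; first exact: herm0.
exact: herm_add (h _ Pi) hy. Qed.
Lemma herm_delta a : Defs.hermitian (delta_mx a a : Mat).
Proof. apply/matrixP => i j; rewrite !mxE.
by rewrite conjc_nat andbC. Qed.
End Mat.


Section PSD.
Variable R : realType.
Variable n : nat.
Notation Mat := 'M[R[i]]_n.
Implicit Types (A B C D : Mat) (z w : R[i]) (x y : R) (v : 'cV[R[i]]_n).

Definition qform v A := (adjmx v *m A *m v) 0 0.

Lemma qformE v A : qform v A = \sum_i \sum_j conjc (v i 0) * A i j * v j 0.
Proof. rewrite /qform mxE exchange_big /=; apply: eq_bigr => j _.
rewrite mxE big_distrl /=; apply: eq_bigr => i _. by rewrite adjmxE. Qed.

Lemma qformD v A B : qform v (A + B) = qform v A + qform v B.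
Proof. by rewrite /qform mulmxDr mulmxDl mxE. Qed.
Lemma qformZ v z A : qform v (z *: A) = z * qform v A.
Proof. by rewrite /qform -scalemxAr -scalemxAl mxE. Qed.

Definition Nv v := \sum_i (complex.Re (v i 0) ^+ 2 + complex.Im (v i 0) ^+ 2).
Definition Sval D := \sum_i \sum_j (`|complex.Re (D i j)| + `|complex.Im (D i j)|).

Lemma Nv_ge0 v : 0 <= Nv v.
Proof. by apply: sumr_ge0 => i _; rewrite addr_ge0 ?sqr_ge0. Qed.
Lemma Nv_ge v i : complex.Re (v i 0) ^+ 2 + complex.Im (v i 0) ^+ 2 <= Nv v.
Proof. rewrite /Nv (bigD1 i) //= lerDl; apply: sumr_ge0 => j _.
by rewrite addr_ge0 ?sqr_ge0. Qed.
Lemma Sval_ge0 D : 0 <= Sval D.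
Proof. by apply: sumr_ge0 => i _; apply: sumr_ge0 => j _; rewrite addr_ge0. Qed.

Lemma qform1 v : qform v 1%:M = ((Nv v)%:C)%C.
Proof. rewrite qformE /Nv; apply: complex_ext; [rewrite cRe_sum cReC|rewrite cIm_sum cImC].
  apply: eq_bigr => i _; rewrite (@sum_only _ _ _ i).
    rewrite !mxE eqxx -[true%:R]/(1 : R[i]) mulr1; case: (v i 0) => a b /=; ring.
  by move=> j /negPf hj; rewrite !mxE eq_sym hj mulr0 mul0r.
rewrite big1 // => i _; rewrite (@sum_only _ _ _ i).
  rewrite !mxE eqxx -[true%:R]/(1 : R[i]) mulr1; case: (v i 0) => a b /=; ring.
by move=> j /negPf hj; rewrite !mxE eq_sym hj mulr0 mul0r.
Qed.

Lemma qform_real v D : Defs.hermitian D -> complex.Im (qform v D) = 0.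
Proof. move=> hD; apply: conjcE; rewrite qformE conjc_sum exchange_big /=.
apply: eq_bigr => j _; rewrite conjc_sum; apply: eq_bigr => i _.
rewrite !rmorphM /= conjcK -(hermE i j hD); ring. Qed.

Lemma term_bound a b c d x y N :
  a ^+ 2 + b ^+ 2 <= N -> c ^+ 2 + d ^+ 2 <= N ->
  `|x * (a * c + b * d) + y * (b * c - a * d)| <= (`|x| + `|y|) * N.
Proof. move=> h1 h2.
have e1 : `|a * c + b * d| <= N.
  have s1 := sqr_ge0 (a + c); have s2 := sqr_ge0 (b + d).
  have s3 := sqr_ge0 (a - c); have s4 := sqr_ge0 (b - d).
  rewrite ler_norml; apply/andP; split; nra.
have e2 : `|b * c - a * d| <= N.
  have s1 := sqr_ge0 (b - c); have s2 := sqr_ge0 (a + d).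
  have s3 := sqr_ge0 (b + c); have s4 := sqr_ge0 (a - d).
  rewrite ler_norml; apply/andP; split; nra.
apply: le_trans (ler_normD _ _) _; rewrite !normrM mulrDl.
by apply: lerD; apply: ler_wpM2l. Qed.

Lemma qform_bound v D : `|complex.Re (qform v D)| <= Sval D * Nv v.
Proof. rewrite qformE cRe_sum /Sval mulr_suml.
apply: le_trans (ler_norm_sum _ _ _) _; apply: ler_sum => i _.
rewrite cRe_sum mulr_suml; apply: le_trans (ler_norm_sum _ _ _) _; apply: ler_sum => j _.
have -> : complex.Re (conjc (v i 0) * D i j * v j 0) =
  complex.Re (D i j) * (complex.Re (v i 0) * complex.Re (v j 0) + complex.Im (v i 0) * complex.Im (v j 0))
  + complex.Im (D i j) * (complex.Im (v i 0) * complex.Re (v j 0) - complex.Re (v i 0) * complex.Im (v j 0)).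
  by case: (D i j) => x y; case: (v i 0) => a b; case: (v j 0) => c d /=; ring.
exact: term_bound (Nv_ge v i) (Nv_ge v j).
Qed.

Lemma psd_perturb D c t : Defs.hermitian D -> 0 <= c -> `|t| * Sval D <= c ->
  psd ((c%:C)%C *: 1%:M + (t%:C)%C *: D).
Proof. move=> hD hc ht; split.
  by apply: herm_add; apply: herm_scale => //; apply: herm1.
move=> v; rewrite -/(qform v _) qformD !qformZ qform1; apply: lec0.
  by rewrite cImD !cImM qform_real // !cReC !cImC; ring.
rewrite cReD !cReM !cReC !cImC !mul0r !subr0.
have hb := qform_bound v D; have hN := Nv_ge0 v.
set q := complex.Re (qform v D) in hb *; set N := Nv v in hb hN *.
have h1 : `|t| * `|q| <= `|t| * (Sval D * N) by apply: ler_wpM2l.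
have h2 : `|t| * Sval D * N <= c * N by apply: ler_wpM2r.
have h3 : - `|t * q| <= t * q by move: (lexx `|t * q|); rewrite ler_norml => /andP [].
rewrite normrM in h3; rewrite mulrA in h1. lra.
Qed.
End PSD.


Section Extra.
Variable R : realType.
Implicit Types (z w : R[i]) (x y : R).
Lemma cReMC x z : complex.Re ((x%:C)%C * z) = x * complex.Re z.
Proof. by case: z => a b /=; ring. Qed.
Lemma cImMC x z : complex.Im ((x%:C)%C * z) = x * complex.Im z.
Proof. by case: z => a b /=; ring. Qed.
Lemma realCD x y : ((x + y)%:C)%C = (x%:C)%C + (y%:C)%C :> R[i].
Proof. by apply: complex_ext => /=; rewrite ?addr0. Qed.
Lemma realCN x : ((- x)%:C)%C = - (x%:C)%C :> R[i].
Proof. by apply: complex_ext => /=; rewrite ?oppr0. Qed.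
Lemma realC1 : ((1 : R)%:C)%C = 1 :> R[i]. Proof. by []. Qed.
Lemma realC0 : ((0 : R)%:C)%C = 0 :> R[i]. Proof. by []. Qed.
Lemma realCM x y : ((x * y)%:C)%C = (x%:C)%C * (y%:C)%C :> R[i].
Proof. by apply: complex_ext => /=; ring. Qed.
End Extra.

Section Upper.
Variable R : realType.
Variable n : nat.
Local Notation m := n.+1.
Local Notation Mat := 'M[R[i]]_m.
Implicit Types (A B C D rho sigma : Mat) (z w : R[i]) (x y : R).

Definition T := ('I_m * 'I_m)%type.
Definition p0 : T := (ord0, ord0).
Definition A0 : {set T} := [set~ p0].
Local Notation K := #|A0|.

Definition W (p : T) : Mat :=
  if p.1 == p.2 then delta_mx p.1 p.1
  else if (p.1 < p.2)%N then delta_mx p.1 p.2 + delta_mx p.2 p.1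
  else 'i%C *: delta_mx p.1 p.2 - 'i%C *: delta_mx p.2 p.1.

Lemma adj_delta (a b : 'I_m) : adjmx (delta_mx a b : Mat) = delta_mx b a.
Proof. apply/matrixP => i j; rewrite !mxE conjc_nat. by rewrite andbC. Qed.

Lemma herm_W p : Defs.hermitian (W p).
Proof. rewrite /W /Defs.hermitian; case: ifP => _; first exact: herm_delta.
case: ifP => _; first by rewrite adjmxD !adj_delta addrC.
rewrite adjmxB !adjmxZ !adj_delta.
have -> : conjc ('i%C : R[i]) = - 'i%C by apply: complex_ext => /=; rewrite ?oppr0.
by rewrite !scaleNr opprK addrC. Qed.

Definition g p (rho : Mat) := complex.Re (hs_inner (W p) rho).
Definition Ghat (rho : Mat) : 'rV[R]_K := \row_l g (enum_val l) rho.

Lemma hs_W_diag a D : hs_inner (W (a, a)) D = D a a.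
Proof. by rewrite /W /= eqxx hs_delta. Qed.
Lemma hs_W_lt (a b : 'I_m) D : (a < b)%N -> hs_inner (W (a, b)) D = D a b + D b a.
Proof. move=> h; rewrite /W /= h (_ : (a == b) = false) ?hs_addl ?hs_delta //.
by apply/negbTE; rewrite neq_ltn h. Qed.
Lemma hs_W_gt (a b : 'I_m) D : (b < a)%N ->
  hs_inner (W (a, b)) D = - 'i%C * D a b + 'i%C * D b a.
Proof. move=> h; rewrite /W /= ltnNge (ltnW h) /= (_ : (a == b) = false).
  rewrite hs_subl !hs_scalel !hs_delta.
  have -> : conjc ('i%C : R[i]) = - 'i%C by apply: complex_ext => /=; rewrite ?oppr0.
  by rewrite !mulNr opprK.
by apply/negbTE; rewrite neq_ltn h orbT. Qed.

Lemma offdiag (a b : 'I_m) D : Defs.hermitian D -> (a < b)%N ->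
  complex.Re (hs_inner (W (a, b)) D) = 0 -> complex.Re (hs_inner (W (b, a)) D) = 0 ->
  D a b = 0 /\ D b a = 0.
Proof. move=> hD hab; rewrite hs_W_lt // hs_W_gt //.
rewrite cReD => h1; rewrite cReD !cReM /= => h2.
have e1 := hermE b a hD; have hr := cReJ (D a b); have hi := cImJ (D a b).
rewrite -e1 in hr hi.
have hRe : complex.Re (D a b) = 0 by lra.
have hIm : complex.Im (D a b) = 0 by lra.
have z1 : D a b = 0 by apply: complex_ext.
split => //; apply: complex_ext; rewrite ?hr ?hi ?hRe ?hIm //=; lra. Qed.

Lemma density_herm rho : density rho -> Defs.hermitian rho.
Proof. by case=> [[]]. Qed.

Lemma Ghat_inj rho sigma : density rho -> density sigma -> Ghat rho = Ghat sigma -> rho = sigma.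
Proof. move=> hr hs hG.
have hp : forall p, p \in A0 -> g p rho = g p sigma.
  move=> p pA; move/matrixP: hG => /(_ 0 (enum_rank_in pA p)).
  by rewrite !mxE (enum_rankK_in pA pA).
set D := rho - sigma.
have hD : Defs.hermitian D by apply: herm_sub; apply: density_herm.
have hZ : forall p, p != p0 -> complex.Re (hs_inner (W p) D) = 0.
  move=> p pn; rewrite /D hs_subr cReB; have := hp p; rewrite /g in_setC1 => ->//.
  by rewrite subrr.
have hdiag : forall a, a != ord0 -> D a a = 0.
  move=> a an; apply: complex_ext; last by apply: conjcE; rewrite -(hermE a a hD).
  have := hZ (a, a); rewrite hs_W_diag => -> //.
  by apply/negP => /eqP [] /eqP; rewrite (negbTE an).
have htr : \tr D = 0 by rewrite /D linearB /=; case: hr => _ ->; case: hs => _ ->; rewrite subrr.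
have h00 : D ord0 ord0 = 0.
  rewrite -htr /mxtrace (@sum_only _ _ _ ord0) // => i; exact: hdiag.
have hne : forall a b : 'I_m, a != b -> (a, b) != p0 /\ (b, a) != p0.
  move=> a b hab; split; apply/negP => /eqP [] h1 h2; move: hab;
  by rewrite h1 h2 eqxx.
suff: D = 0 by move/eqP; rewrite subr_eq0 => /eqP.
apply/matrixP => a b; rewrite [RHS]mxE.
case: (ltngtP a b) => hab.
- have [hn1 hn2] := hne a b (negbT (ltn_eqF hab : (a == b) = false)).
  by have [] := offdiag hD hab (hZ _ hn1) (hZ _ hn2).
- have [hn1 hn2] := hne b a (negbT (ltn_eqF hab : (b == a) = false)).
  by have [] := offdiag hD hab (hZ _ hn1) (hZ _ hn2).
- have -> : b = a by apply/val_inj.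
  case: (eqVneq a ord0) => [->|an]; [exact: h00 | exact: hdiag].
Qed.

Definition cc (r : 'rV[R]_K) := \sum_l (r 0 l) ^+ 2.
Definition Amat (r : 'rV[R]_K) : Mat := \sum_l (((2 * r 0 l)%:C)%C *: W (enum_val l)).
Definition eps (r : 'rV[R]_K) := (1 + Sval (Amat r))^-1.
Definition M1 r : Mat := (((1/2 : R)%:C)%C *: 1%:M) + (((eps r / 2)%:C)%C *: Amat r).
Definition M2 r : Mat := (((1/2 : R)%:C)%C *: 1%:M) + (((- (eps r / 2))%:C)%C *: Amat r).
Definition mu r := [:: M1 r; M2 r].
Definition sc r (y : nat) := if y == 0%N then (eps r)^-1 - cc r else - (eps r)^-1 - cc r.

Lemma herm_Amat r : Defs.hermitian (Amat r).
Proof. by apply: herm_sum => l _; apply: herm_scale; apply: herm_W. Qed.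

Lemma eps_gt0 r : 0 < eps r.
Proof. by rewrite /eps invr_gt0; have := Sval_ge0 (Amat r); lra. Qed.

Lemma eps_S r : eps r * Sval (Amat r) <= 1.
Proof. rewrite /eps; have h := Sval_ge0 (Amat r).
rewrite ler_pdivrMl ?ltr_wpDr //; lra. Qed.

Lemma meas r : measurement (mu r).
Proof. have he := eps_gt0 r; have hS := eps_S r; have h0 := Sval_ge0 (Amat r); split.
  move=> [|[|y]] //= _; apply: psd_perturb (herm_Amat r) _ _; rewrite ?normrN ?ger0_norm; lra.
rewrite /= !big_ord_recl big_ord0 addr0 /= /M1 /M2 addrACA -!scalerDl -!realCD.
have -> : (1 / 2 + 1 / 2 : R) = 1 by field.
by rewrite subrr realC1 realC0 scale1r scale0r addr0.
Qed.

Lemma hsA r rho : complex.Re (hs_inner (Amat r) rho) = \sum_l 2 * r 0 l * Ghat rho 0 l.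
Proof. rewrite hs_suml cRe_sum; apply: eq_bigr => l _.
by rewrite hs_scalel conjc_real cReMC mxE. Qed.

Lemma hsM r rho x y : density rho ->
  complex.Re (hs_inner ((((x%:C)%C *: 1%:M) + ((y%:C)%C *: Amat r)) : Mat) rho)
  = x + y * complex.Re (hs_inner (Amat r) rho).
Proof. case=> _ htr; rewrite hs_addl !hs_scalel !conjc_real hs_1l htr cReD !cReMC cRe1.
by rewrite mulr1. Qed.

Lemma score r rho : density rho ->
  expected_score sc mu r rho = \sum_l (2 * r 0 l * Ghat rho 0 l - r 0 l ^+ 2).
Proof. move=> hr; rewrite /expected_score /= !big_ord_recl big_ord0 addr0 /=.
rewrite /M1 /M2 !hsM // hsA /sc /= sumrB -/(cc r).
set a := \sum_l _; have he := eps_gt0 r.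
field; lra. Qed.

Lemma argmax (G r : 'rV[R]_K) :
  (forall r' : 'rV[R]_K, \sum_l (2 * r' 0 l * G 0 l - r' 0 l ^+ 2) <= \sum_l (2 * r 0 l * G 0 l - r 0 l ^+ 2))
  <-> r = G.
Proof.
have key : forall r' : 'rV[R]_K, \sum_l (2 * G 0 l * G 0 l - G 0 l ^+ 2) - \sum_l (2 * r' 0 l * G 0 l - r' 0 l ^+ 2)
   = \sum_l (G 0 l - r' 0 l) ^+ 2.
  by move=> r'; rewrite -sumrB; apply: eq_bigr => l _; ring.
split.
  move=> /(_ G); rewrite -subr_ge0 => h.
  have h2 : \sum_l (G 0 l - r 0 l) ^+ 2 = 0.
    apply/eqP; rewrite eq_le sumr_ge0 ?andbT => [|l _]; last exact: sqr_ge0.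
    by rewrite -(key r) -oppr_ge0 opprB.
  apply/rowP => l; have := psumr_eq0P (fun l _ => sqr_ge0 (G 0 l - r 0 l)) h2 (i:=l) isT.
  by move/eqP; rewrite sqrf_eq0 subr_eq0 => /eqP ->.
move=> -> r'; rewrite -subr_ge0 key; apply: sumr_ge0 => l _; exact: sqr_ge0.
Qed.

Lemma elic : elicitable Ghat.
Proof. exists sc, mu; split; first exact: meas.
move=> rho hr r; rewrite -argmax; split => H r'; have := H r'; by rewrite !score.
Qed.

Lemma ident : identifiable Ghat.
Proof. move=> r _.
exists (fun l => W (enum_val l) - (((r 0 l)%:C)%C *: 1%:M)); split.
  by move=> l; apply: herm_sub; [apply: herm_W | apply: herm_scale; apply: herm1].
move=> rho hr; have htr : \tr rho = 1 by case: hr.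
have hh : forall l, hs_inner (W (enum_val l) - (((r 0 l)%:C)%C *: 1%:M)) rho
    = hs_inner (W (enum_val l)) rho - ((r 0 l)%:C)%C.
  by move=> l; rewrite hs_subl hs_scalel hs_1l htr conjc_real mulr1.
split.
  move=> hG l; rewrite hh -hG; apply/eqP; rewrite subr_eq0; apply/eqP; apply: complex_ext.
    by rewrite mxE.
  by rewrite herm_hs_real //; [apply: herm_W | apply: density_herm].
move=> H; apply/rowP => l; rewrite mxE /g; move: (H l); rewrite hh => /eqP.
by rewrite subr_eq0 => /eqP ->.
Qed.

Lemma upper (F : Mat -> R) : k_elicitable F K.
Proof.
pose psi (r : 'rV[R]_K) := F (epsilon (inhabits 0) (fun rho => density rho /\ Ghat rho = r)).
exists Ghat, psi; split; first exact: elic; split; first exact: ident.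
move=> rho hr; rewrite /psi.
have [h1 h2] := epsilon_spec (inhabits 0) (fun rho' => density rho' /\ Ghat rho' = Ghat rho) (ex_intro _ rho (conj hr erefl)).
by rewrite (Ghat_inj h1 hr h2).
Qed.

Lemma cardA0 : K = (m ^ 2 - 1)%N.
Proof. by rewrite cardsC1 card_prod card_ord expnS expn1 subn1. Qed.

End Upper.


Section Lower.
Variable R : realType.
Variable n : nat.
Local Notation m := n.+1.
Local Notation Mat := 'M[R[i]]_m.
Implicit Types (A B C D rho sigma : Mat) (z w : R[i]) (x y : R) (P Q : 'M[R]_m).

Lemma ordeq (a b : 'I_m) : (a == b) = (nat_of_ord a == nat_of_ord b).
Proof. by []. Qed.

Definition H P : Mat := \matrix_(i, j)
  (if i == j then ((P i i)%:C)%C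
   else if (i < j)%N then ((P i j)%:C)%C + 'i%C * ((P j i)%:C)%C
   else ((P j i)%:C)%C - 'i%C * ((P i j)%:C)%C).

Lemma herm_H P : Defs.hermitian (H P).
Proof. apply/matrixP => i j; rewrite !mxE !ordeq.
case: (ltngtP i j) => h; try by apply: complex_ext => /=; ring.
have -> : j = i by apply/val_inj.
by apply: complex_ext => /=; ring.
Qed.

Lemma H_lin a P Q : H (a *: P + Q) = ((a%:C)%C *: H P) + H Q.
Proof. apply/matrixP => i j; rewrite !mxE.
by case: ifP => _; [|case: ifP => _]; apply: complex_ext => /=; ring.
Qed.

Lemma H_inj P : H P = 0 -> P = 0.
Proof. move=> h; apply/matrixP => a b; rewrite [RHS]mxE.
move/matrixP: h => h.
have ha := h a b; have hb := h b a; have hc := h a a; move: ha hb hc; rewrite !mxE !ordeq.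
case: (ltngtP a b) => hab.
- move=> /(congr1 (@complex.Re _)) /= e _ _; lra.
- move=> _ /(congr1 (@complex.Im _)) /= e _; lra.
- rewrite eqxx => _ _ /(congr1 (@complex.Re _)) /= e.
  have -> : b = a by apply/val_inj.
  exact: e.
Qed.

Section Phi.
Variable k : nat.
Variable V : 'I_k -> Mat.

Definition phiv (u : 'rV[R]_(m * m)) : 'rV[R]_(k.+1) :=
  \row_(l < k.+1) (match unlift ord_max l with
      | Some i => complex.Re (hs_inner (V i) (H (vec_mx u)))
      | None => complex.Re (\tr (H (vec_mx u))) end).

Lemma phiv_lin : linear phiv.
Proof. move=> a u v; apply/rowP => l; rewrite !mxE linearP H_lin.
case: (unlift ord_max l) => [i|].
  by rewrite hs_addr hs_scaler cReD cReMC.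
by rewrite mxtraceD mxtraceZ cReD cReMC.
Qed.

HB.instance Definition _ := GRing.isLinear.Build R 'rV[R]_(m * m) 'rV[R]_(k.+1) *:%R phiv phiv_lin.

Lemma kernel_exists : (k.+1 < m * m)%N -> exists u : 'rV[R]_(m * m), u != 0 /\ phiv u = 0.
Proof. move=> hk.
set L := lin1_mx phiv.
have hr : (0 < \rank (kermx L))%N.
  rewrite mxrank_ker; have := rank_leq_col L; lia.
have : kermx L != 0 by rewrite -mxrank_eq0 -lt0n.
case: (boolP [exists i, row i (kermx L) != 0]).
  move=> /existsP [i hi] _; exists (row i (kermx L)); split => //.
  by rewrite -mul_rV_lin1 -/L -row_mul mulmx_ker row0.
rewrite negb_exists => /forallP hall; case/negP; apply/eqP/row_matrixP => i.
by rewrite row0; apply/eqP; have := hall i; rewrite negbK.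
Qed.
End Phi.


Lemma lower (F : Mat -> R) k : strictly_convex F -> k_elicitable F k -> (m ^ 2 - 1 <= k)%N.
Proof.
move=> hF [Gh [psi [_ [hid hpsi]]]]; rewrite leqNgt; apply/negP => hk.
have hk' : (k.+1 < m * m)%N by move: hk; rewrite expnS expn1; lia.
have hm : (0 : R) < m%:R by rewrite ltr0n.
set c := (m%:R : R)^-1.
have hc : 0 < c by rewrite invr_gt0.
pose rho0 : Mat := (c%:C)%C *: 1%:M.
have hd_gen : forall D x, Defs.hermitian D -> \tr D = 0 -> `|x| * Sval D <= c ->
    density (rho0 + (x%:C)%C *: D).
  move=> D x hD htr hx; split; first by apply: psd_perturb => //; exact: ltW.
  rewrite mxtraceD !mxtraceZ htr mulr0 addr0 mxtrace1.
  have -> : (m%:R : R[i]) = ((m%:R : R)%:C)%C by rewrite rmorph_nat.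
  rewrite -realCM.
  by rewrite -realC1; congr (_%:C)%C; rewrite /c mulVf // pnatr_eq0.
have hd0 : density rho0.
  have := hd_gen 0 0 (herm0 _ _) (mxtrace0 _ _); rewrite scaler0 addr0; apply.
  by rewrite normr0 mul0r ltW.
have [V [hV hiff]] := hid (Gh rho0) (ex_intro _ rho0 (conj hd0 erefl)).
have [u [hu0 hu]] := kernel_exists V hk'.
set D := H (vec_mx u).
have hD : Defs.hermitian D by apply: herm_H.
have hD0 : D != 0.
  apply/negP => /eqP /H_inj h; move: hu0; rewrite -(vec_mxK u) h.
  by rewrite linear0 eqxx.
have hVD : forall l, hs_inner (V l) D = 0.
  move=> l; apply: complex_ext; last by rewrite herm_hs_real.
  move/rowP: hu => /(_ (lift ord_max l)); rewrite !mxE liftK. by [].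
have htrD : \tr D = 0.
  apply: complex_ext; last by rewrite -hs_1l herm_hs_real //; apply: herm1.
  move/rowP: hu => /(_ ord_max); rewrite !mxE unlift_none. by [].
have hV0 : forall l, hs_inner (V l) rho0 = 0 by apply/(hiff rho0 hd0).
have hS := Sval_ge0 D; set S := Sval D in hS *.
set t := c / (1 + S).
have ht : 0 < t by rewrite /t divr_gt0 //; lra.
have hbound : forall x, 0 <= x <= t -> `|x| * S <= c.
  move=> x /andP [hx0 hxt]; rewrite ger0_norm //.
  have : t * S <= c by rewrite /t mulrAC ler_pdivrMr ?ltr_wpDr //; nra.
  have : x * S <= t * S by apply: ler_wpM2r.
  lra.
have hG : forall x, 0 <= x <= t -> Gh (rho0 + (x%:C)%C *: D) = Gh rho0.
  move=> x hx; apply/(hiff _ (hd_gen D x hD htrD (hbound x hx))) => l.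
  by rewrite hs_addr hs_scaler hV0 hVD mulr0 addr0.
have hFx : forall x, 0 <= x <= t -> F (rho0 + (x%:C)%C *: D) = F rho0.
  move=> x hx; rewrite hpsi ?hG // ?hpsi //; exact: hd_gen (hbound x hx).
have ht1 : 0 <= t <= t by rewrite lexx ltW.
have ht2 : 0 <= t / 2 <= t by apply/andP; split; lra.
have hne : rho0 <> rho0 + (t%:C)%C *: D.
  move=> /eqP; rewrite -subr_eq0 opprD addrA subrr add0r oppr_eq0 scaler_eq0 (negbTE hD0) orbF.
  move/eqP => /(congr1 (@complex.Re _)) /=; lra.
have hh : (0 < (1 / 2 : R)) && ((1 / 2 : R) < 1) by apply/andP; split; lra.
have := hF _ _ _ hd0 (hd_gen D t hD htrD (hbound t ht1)) hne hh.
have -> : (((1 / 2)%:C)%C *: rho0 + ((1 - 1 / 2)%:C)%C *: (rho0 + (t%:C)%C *: D) : Mat)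
  = rho0 + (((t / 2)%:C)%C *: D).
  rewrite scalerDr addrA -scalerDl -realCD (_ : 1 / 2 + (1 - 1 / 2) = 1 :> R); last by field.
  rewrite realC1 scale1r scalerA -realCM; congr (_ + (_%:C)%C *: _); by field.
move=> h; rewrite !hFx // in h; lra.
Qed.

End Lower.

Theorem theorem6p5 (R : realType) (n : nat) (F : 'M[R[i]]_n -> R) :
  strictly_convex F -> elicQ_is F (n ^ 2 - 1)%N.
Proof.
case: n F => [|n] F hF.
  have nod : forall rho : 'M[R[i]]_0, ~ density rho.
    move=> rho [_]; rewrite /mxtrace big_ord0 => /eqP; by rewrite eq_sym oner_eq0.
  split => //.
  exists (fun _ => 0), (fun _ => F 0); split; last split.
  - exists (fun _ _ => 0), (fun _ => [:: 1%:M]); split; last by move=> rho /nod.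
    move=> _; split; last by rewrite big_ord1.
    move=> [|y] // _ /=.
    have := @psd_perturb R 0 0 1 0 (herm0 _ _) ler01.
    rewrite normr0 mul0r ler01 realC1 scale1r scaler0 addr0; apply => //.
  - by move=> r [rho [/nod]].
  - by move=> rho /nod.
split; last by move=> k; exact: lower hF.
rewrite -(cardA0 n); exact: upper.
Qed.
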